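(* Let $\mathbf{F}$ be a field of characteristic $2$, $m\ge1$, and let $A,B\in\{0,1\}^m$ with $|A|\ge2$ and $|B|\ge2$. Put $I=A\cap B$, $J=A\setminus B$, $K=B\setminus A$. Then $$\mathrm{Tr}(A)\mathrm{Tr}(B)+\sum_{L<I}x^{I-L}N^L\,\mathrm{Tr}(I-L+J+K)+N^I\sum_{L<J}x^{J-L}\,\mathrm{Tr}(L+K)\in\ker(\pi).$$
   Context: Let $S=\mathbf{F}[x_1,y_1,\dots,x_m,y_m]$ with the $\mathbf{F}$-algebra automorphism $\sigma(x_i)=x_i$, $\sigma(y_i)=y_i+x_i$ of order 2, and let $S^{C_2}$ be the ring of $\sigma$-invariants. For $A=(a_1,\dots,a_m)\in\mathbb{N}^m$ write $x^A=\prod_s x_s^{a_s}$, $y^A=\prod_s y_s^{a_s}$, $N^A=\prod_s N_s^{a_s}$, and $|A|=\sum_s a_s$. $A\le B$ means componentwise $\le$; $L<A$ means $L\le A$, $L\ne A$; sums and differences of sequences are componentwise. Elements of $\{0,1\}^m$ are identified with subsets of $\{1,\dots,m\}$ (via characteristic vectors), and $\cap$, $\setminus$ are the corresponding set operations. $\Delta_s$ is the sequence with $1$ in position $s$ and $0$ elsewhere. For $A\in\{0,1\}^m$, $\mathrm{tr}(A)=y^A+\prod_s(y_s+x_s)^{a_s}\in S^{C_2}$. Let $R=\mathbf{F}[x_1,\dots,x_m,N_1,\dots,N_m]$ be a polynomial ring in $2m$ indeterminates and $Q=R[\mathrm{Tr}(A): A\in\{0,1\}^m,|A|\ge2]$ a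 polynomial ring over $R$. Let $\pi:Q\to S^{C_2}$ be the $\mathbf{F}$-algebra homomorphism with $\pi(x_i)=x_i$, $\pi(N_i)=y_i^2+x_iy_i$, $\pi(\mathrm{Tr}(A))=\mathrm{tr}(A)$. Convention: for $C\in\{0,1\}^m$ with $|C|\le1$, $\mathrm{Tr}(0)=0$ and $\mathrm{Tr}(\Delta_s)=x_s$ in $Q$ (so $\pi(\mathrm{Tr}(C))=\mathrm{tr}(C)$ for all $C$). *)

(* Defs.v *)
From mathcomp Require Import all_boot all_order all_algebra.
From mathcomp Require Export mpoly.
Set Implicit Arguments. Unset Strict Implicit. Unset Printing Implicit Defensive.
Import GRing.Theory.
Local Open Scope ring_scope.

(* Elements of {0,1}^m are represented as subsets {set 'I_m}. *)

Section Defs.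
Variables (F : fieldType) (m : nat).

Definition Sring := {mpoly F[m + m]}.
Definition xS (i : 'I_m) : Sring := 'X_(lshift m i).
Definition yS (i : 'I_m) : Sring := 'X_(rshift m i).

Definition trS (A : {set 'I_m}) : Sring :=
  \prod_(s in A) yS s + \prod_(s in A) (yS s + xS s).

(* Q: polynomial ring over F in the variables x_i, N_i (i < m) and Tr(A)
   indexed by all subsets A (only those with |A| >= 2 are used as Tr(A)). *)
Definition nQ := (m + m + #|{set 'I_m}|)%N.
Definition Qring := {mpoly F[nQ]}.
Definition xQ (i : 'I_m) : Qring := 'X_(lshift #|{set 'I_m}| (lshift m i)).
Definition NQ (i : 'I_m) : Qring := 'X_(lshift #|{set 'I_m}| (rshift m i)).
Definition TrVar (A : {set 'I_m}) : Qring := 'X_(rshift (m + m) (enum_rank A)).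

(* Tr(C) with the convention Tr(0) = 0, Tr(Delta_s) = x_s. *)
Definition TrQ (C : {set 'I_m}) : Qring :=
  if (2 <= #|C|)%N then TrVar C
  else match [pick s in C] with Some s => xQ s | None => 0 end.

Definition pi_gen (k : 'I_nQ) : Sring :=
  match split k with
  | inl k' => match split k' with
              | inl i => xS i
              | inr i => yS i ^+ 2 + xS i * yS i
              end
  | inr a => trS (enum_val a)
  end.

(* pi : Q -> S^{C_2} (viewed inside S), the F-algebra homomorphism *)
Definition piQ (p : Qring) : Sring := mmap (fun c : F => c%:MP) pi_gen p.

Definition xpow (A : {set 'I_m}) : Qring := \prod_(s in A) xQ s.
Definition Npow (A : {set 'I_m}) : Qring := \prod_(s in A) NQ s.

End Defs.

(* Main.v *)
Require Import Defs.
From mathcomp Require Import all_boot all_order all_algebra.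
From mathcomp Require Import mpoly.
Import GRing.Theory.
Local Open Scope ring_scope.
From mathcomp Require Import ring.
Section Alg.
Variables (R : comRingType) (T : finType).

Lemma prodU (X Y : {set T}) (f : T -> R) : [disjoint X & Y] ->
  \prod_(s in X :|: Y) f s = \prod_(s in X) f s * \prod_(s in Y) f s.
Proof.
move=> d; rewrite (big_setID X); congr (_ * _); apply: eq_bigl => i; rewrite !inE.
  by case: (i \in X); case: (i \in Y).
have /setP/(_ i) := disjoint_setI0 d; rewrite !inE.
by case: (i \in X); case: (i \in Y).
Qed.

Lemma subset_sum (I : {set T}) (f g : T -> R) :
  \sum_(L : {set T} | L \subset I) \prod_(s in I :\: L) f s * \prod_(s in L) g s
  = \prod_(s in I) (f s + g s).
Proof.
pose F i := if i \in I then g i else 0.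
pose G i := if i \in I then f i else 1.
have -> : \prod_(s in I) (f s + g s) = \prod_s (F s + G s).
  rewrite [RHS](bigID (fun s => s \in I)) /= [X in _ * X]big1 ?mulr1.
    by apply: eq_bigr => i iI; rewrite /F /G iI addrC.
  by move=> i /negbTE iI; rewrite /F /G iI add0r.
rewrite bigA_distr [RHS](bigID (fun L : {set T} => L \subset I)) /=.
rewrite [X in _ = _ + X]big1 ?addr0; last first.
  move=> L /subsetPn [i iL iI].
  by rewrite (bigD1 i) //= iL /F (negbTE iI) mul0r.
apply: eq_bigr => L LI.
rewrite [RHS](bigID (fun s => s \in I)) /= [X in _ = _ * X]big1 ?mulr1; last first.
  move=> i /negbTE iI; have : i \notin L by apply: contraFN iI => /(subsetP LI).
  by move/negbTE => ->; rewrite /G iI.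
rewrite [RHS](bigID (fun s => s \in L)) /= mulrC; congr (_ * _); apply: eq_big.
- move=> i /=; case iL: (i \in L); rewrite ?andbF //.
  by rewrite (subsetP LI).
- by move=> i iL; rewrite iL /F (subsetP LI _ iL).
- by move=> i /=; rewrite !inE andbC.
- by move=> i; rewrite inE => /andP [/negbTE iL iI]; rewrite iL /G iI.
Qed.


Lemma sum_proper (I : {set T}) (F : {set T} -> R) :
  \sum_(L : {set T} | L \proper I) F L = \sum_(L : {set T} | L \subset I) F L - F I.
Proof.
rewrite [in RHS](bigD1 I) //=; idtac; rewrite [RHS]addrC [RHS]addKr; apply: eq_bigl => L.
by rewrite properEneq andbC.
Qed.

Lemma disjU (X Y Z : {set T}) : [disjoint X & Z] -> [disjoint Y & Z] ->
  [disjoint X :|: Y & Z].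
Proof. by move=> d1 d2; rewrite -setI_eq0 setIUl !disjoint_setI0 // setU0. Qed.

Lemma disjD (X Y Z : {set T}) : [disjoint X & Z] -> [disjoint X :\: Y & Z].
Proof.
move=> d; rewrite -setI_eq0; apply/eqP/setP => i; have /setP/(_ i) := disjoint_setI0 d.
by rewrite !inE; case: (i \in X); case: (i \in Y); case: (i \in Z).
Qed.

Lemma disjS (X Y Z : {set T}) : X \subset Y -> [disjoint Y & Z] -> [disjoint X & Z].
Proof.
move=> XY d; rewrite -setI_eq0; apply/eqP/setP => i; have /setP/(_ i) := disjoint_setI0 d.
rewrite !inE; case iX: (i \in X) => //=; by rewrite (subsetP XY _ iX).
Qed.

Lemma alg (a b x N : T -> R) (h2 : 2%:R = 0 :> R)
  (hx : forall s, x s = a s + b s) (hN : forall s, N s = a s * b s)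
  (I J K : {set T}) (dIJ : [disjoint I & J]) (dIK : [disjoint I & K])
  (dJK : [disjoint J & K]) :
  let tr C := \prod_(s in C) a s + \prod_(s in C) b s in
  tr (I :|: J) * tr (I :|: K)
  + \sum_(L : {set T} | L \proper I)
      \prod_(s in I :\: L) x s * \prod_(s in L) N s * tr ((I :\: L) :|: J :|: K)
  + \prod_(s in I) N s * \sum_(L : {set T} | L \proper J)
      \prod_(s in J :\: L) x s * tr (L :|: K) = 0.
Proof.
move=> tr.
have S1 : \sum_(L : {set T} | L \subset I)
      \prod_(s in I :\: L) x s * \prod_(s in L) N s * tr ((I :\: L) :|: J :|: K)
   = \prod_(s in I) (a s * a s) * (\prod_(s in J) a s * \prod_(s in K) a s)
   + \prod_(s in I) (b s * b s) * (\prod_(s in J) b s * \prod_(s in K) b s).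
  transitivity (\sum_(L : {set T} | L \subset I)
     ((\prod_(s in I :\: L) (x s * a s) * \prod_(s in L) N s)
        * (\prod_(s in J) a s * \prod_(s in K) a s)
      + (\prod_(s in I :\: L) (x s * b s) * \prod_(s in L) N s)
        * (\prod_(s in J) b s * \prod_(s in K) b s))).
    apply: eq_bigr => L LI.
    have d1 : [disjoint I :\: L & J] by apply: disjD.
    have d2 : [disjoint (I :\: L) :|: J & K] by apply: disjU => //; apply: disjD.
    rewrite /tr !prodU // !big_split /=; ring.
  rewrite big_split /= -!mulr_suml !subset_sum; congr (_ * _ + _ * _);
    apply: eq_bigr => s _; rewrite hx hN.
    have -> : (a s + b s) * a s + a s * b s = a s * a s + 2%:R * (a s * b s) by ring.
    by rewrite h2 mul0r addr0.
  have -> : (a s + b s) * b s + a s * b s = b s * b s + 2%:R * (a s * b s) by ring.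
  by rewrite h2 mul0r addr0.
have S2 : \sum_(L : {set T} | L \subset J) \prod_(s in J :\: L) x s * tr (L :|: K)
   = \prod_(s in J) b s * \prod_(s in K) a s + \prod_(s in J) a s * \prod_(s in K) b s.
  transitivity (\sum_(L : {set T} | L \subset J)
     ((\prod_(s in J :\: L) x s * \prod_(s in L) a s) * \prod_(s in K) a s
      + (\prod_(s in J :\: L) x s * \prod_(s in L) b s) * \prod_(s in K) b s)).
    apply: eq_bigr => L LJ.
    have d1 : [disjoint L & K] by apply: disjS dJK.
    rewrite /tr !prodU //; ring.
  rewrite big_split /= -!mulr_suml !subset_sum; congr (_ * _ + _ * _);
    apply: eq_bigr => s _; rewrite hx.
    have -> : a s + b s + a s = b s + 2%:R * a s by ring.
    by rewrite h2 mul0r addr0.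
  have -> : a s + b s + b s = a s + 2%:R * b s by ring.
  by rewrite h2 mul0r addr0.
rewrite !sum_proper S1 S2 !setDv !big_set0 set0U /tr !prodU //.
have hNI : \prod_(s in I) N s = \prod_(s in I) a s * \prod_(s in I) b s.
  by rewrite -big_split; apply: eq_bigr => s _; exact: hN.
rewrite hNI !big_split /=.
set pI := \prod_(s in I) a s; set qI := \prod_(s in I) b s.
set pJ := \prod_(s in J) a s; set qJ := \prod_(s in J) b s.
set pK := \prod_(s in K) a s; set qK := \prod_(s in K) b s.
transitivity (2%:R * (pI * pI * pJ * pK + qI * qI * qJ * qK
   + pI * qI * (pJ * qK + qJ * pK) - pI * qI * (pJ * pK + qJ * qK))).
  ring.
by rewrite h2 mul0r.
Qed.
End Alg.

Section P.
Variables (F : fieldType) (m : nat).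

Lemma piQ_mul (p q : Qring F m) : piQ (p * q) = piQ p * piQ q.
Proof. by rewrite /piQ rmorphM. Qed.
Lemma piQ_add (p q : Qring F m) : piQ (p + q) = piQ p + piQ q.
Proof. by rewrite /piQ rmorphD. Qed.
Lemma piQ_sum (I : Type) (r : seq I) (P : pred I) (f : I -> Qring F m) :
  piQ (\sum_(i <- r | P i) f i) = \sum_(i <- r | P i) piQ (f i).
Proof. by rewrite /piQ rmorph_sum. Qed.
Lemma piQ_prod (I : Type) (r : seq I) (P : pred I) (f : I -> Qring F m) :
  piQ (\prod_(i <- r | P i) f i) = \prod_(i <- r | P i) piQ (f i).
Proof. by rewrite /piQ rmorph_prod. Qed.
Lemma piQ_X (k : 'I_(nQ m)) : piQ 'X_k = pi_gen F k.
Proof. by rewrite /piQ mmapX mmap1U. Qed.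

Lemma h2S : (2 \in [pchar F])%N -> 2%:R = 0 :> Sring F m.
Proof. by move=> h; rewrite -mpolyC_nat (pcharf0 h). Qed.

Lemma piQ_x (i : 'I_m) : piQ (xQ F i) = xS F i.
Proof. by rewrite piQ_X /pi_gen (unsplitK (inl _ _)) (unsplitK (inl _ _)). Qed.
Lemma piQ_N (i : 'I_m) : piQ (NQ F i) = yS F i ^+ 2 + xS F i * yS F i.
Proof. by rewrite piQ_X /pi_gen (unsplitK (inl _ _)) (unsplitK (inr _ _)). Qed.

Lemma piQ_Tr (h2 : (2 \in [pchar F])%N) (C : {set 'I_m}) : piQ (TrQ F C) = trS F C.
Proof.
rewrite /TrQ; case: ifP => hC.
  by rewrite /TrVar piQ_X /pi_gen (unsplitK (inr _ _)) enum_rankK.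
case: pickP => [s sC|C0].
  have eC : C = [set s].
    apply/eqP; rewrite eq_sym eqEcard sub1set sC cards1 /=.
    by move: hC; case: #|C| => [|[|]].
  rewrite piQ_x eC /trS !big_set1 addrA -mulr2n -mulr_natr h2S // mulr0 add0r //.
have -> : C = set0 by apply/setP => i; rewrite inE C0.
by rewrite /trS !big_set0 -mulr2n -mulr_natr mul1r h2S // /piQ rmorph0.
Qed.
Lemma piQ_xpow (L : {set 'I_m}) : piQ (xpow F L) = \prod_(s in L) xS F s.
Proof. by rewrite /xpow piQ_prod; apply: eq_bigr => s _; rewrite piQ_x. Qed.
Lemma piQ_Npow (L : {set 'I_m}) :
  piQ (Npow F L) = \prod_(s in L) (yS F s ^+ 2 + xS F s * yS F s).
Proof. by rewrite /Npow piQ_prod; apply: eq_bigr => s _; rewrite piQ_N. Qed.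
End P.

Theorem mainTheorem3 (F : fieldType) (m : nat) (A B : {set 'I_m}) :
  (2 \in [pchar F])%N -> (0 < m)%N ->
  (2 <= #|A|)%N -> (2 <= #|B|)%N ->
  let I := A :&: B in
  let J := A :\: B in
  let K := B :\: A in
  piQ (TrQ F A * TrQ F B
       + \sum_(L : {set 'I_m} | L \proper I)
           xpow F (I :\: L) * Npow F L * TrQ F ((I :\: L) :|: J :|: K)
       + Npow F I * \sum_(L : {set 'I_m} | L \proper J)
           xpow F (J :\: L) * TrQ F (L :|: K)) = 0.
Proof.
move=> h2 _ _ _ I J K.
have eA : A = I :|: J by rewrite /I /J setID.
have eB : B = I :|: K by rewrite /I /K setIC setID.
have dIJ : [disjoint I & J].
  by rewrite -setI_eq0; apply/eqP/setP => i; rewrite !inE; case: (i \in A); case: (i \in B).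
have dIK : [disjoint I & K].
  by rewrite -setI_eq0; apply/eqP/setP => i; rewrite !inE; case: (i \in A); case: (i \in B).
have dJK : [disjoint J & K].
  by rewrite -setI_eq0; apply/eqP/setP => i; rewrite !inE; case: (i \in A); case: (i \in B).
rewrite !piQ_add !piQ_mul !piQ_sum piQ_Npow !piQ_Tr //.
under [\sum_(L : {set 'I_m} | L \proper I) _]eq_bigr => L _ do rewrite !piQ_mul piQ_xpow piQ_Npow piQ_Tr //.
under [\sum_(L : {set 'I_m} | L \proper J) _]eq_bigr => L _ do rewrite !piQ_mul piQ_xpow piQ_Tr //.
rewrite [in trS F A]eA [in trS F B]eB /trS.
have h2' := @h2S F m h2.
have hx : forall s : 'I_m, xS F s = yS F s + (yS F s + xS F s).
  by move=> s; rewrite addrA -mulr2n -mulr_natr h2' mulr0 add0r.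
have hN : forall s : 'I_m, yS F s ^+ 2 + xS F s * yS F s = yS F s * (yS F s + xS F s).
  by move=> s; rewrite expr2 mulrDr [xS F s * _]mulrC.
have H := @alg _ _ (@yS F m) (fun s => yS F s + xS F s) (@xS F m) (fun s => yS F s ^+ 2 + xS F s * yS F s) h2' hx hN I J K dIJ dIK dJK.
exact: H.
Qed.
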